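(* Let $\mathcal{C}$ be a permutation class with bounded horizontal path-width. Then there is a constant $\alpha$ depending only on $\mathcal{C}$ such that for every $\pi\in\mathcal{C}$ and every subset $S$ of the diagram of $\pi$, we have $\mathrm{intv}_y(S)\le\alpha\cdot\mathrm{intv}_x(S)$.
   Context: Permutations of length $n$ are identified with their diagrams $\{(i,\pi_i)\}$; a permutation class is a set of permutations closed under pattern containment. The intervalicity of $A\subseteq[n]$ is the least number of disjoint integer intervals with union $A$; for a point set $S$, $\mathrm{intv}_x(S)$ and $\mathrm{intv}_y(S)$ denote the intervalicities of its projections onto the $x$- and $y$-axes, and its grid-complexity is their maximum. The horizontal path-width of $\pi$ is the maximum over $i\in[n]$ of the grid-complexity of $\{(1,\pi_1),\dots,(i,\pi_i)\}$; $\mathcal{C}$ has bounded horizontal path-width if this is bounded over all $\pi\in\mathcal{C}$. *)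

(* Defs.v *)
From mathcomp Require Import all_boot all_fingroup.
Set Implicit Arguments. Unset Strict Implicit. Unset Printing Implicit Defensive.

(* Permutations of length n are elements of 'S_n = {perm 'I_n}; positions and
   values are indexed 0..n-1 (a harmless shift from 1..n). *)

Definition contains n k (pi : 'S_n) (sigma : 'S_k) : Prop :=
  exists f : 'I_k -> 'I_n,
    (forall i j : 'I_k, (i < j)%N -> (f i < f j)%N) /\
    (forall i j : 'I_k, (pi (f i) < pi (f j))%N = (sigma i < sigma j)%N).

Definition perm_class (C : forall n, 'S_n -> Prop) : Prop :=
  forall n k (pi : 'S_n) (sigma : 'S_k), C n pi -> contains pi sigma -> C k sigma.

Definition is_interval_cover n (A : {set 'I_n}) (s : seq ('I_n * 'I_n)) : bool :=
  [&& all (fun p : 'I_n * 'I_n => (p.1 <= p.2)%N) s,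
      pairwise (fun p q : 'I_n * 'I_n => (p.2 < q.1)%N || (q.2 < p.1)%N) s &
      [forall x : 'I_n, (x \in A) == has (fun p : 'I_n * 'I_n => (p.1 <= x <= p.2)%N) s]].

Definition has_cover_of_size n (A : {set 'I_n}) (k : nat) : bool :=
  [exists s : k.-tuple ('I_n * 'I_n), is_interval_cover A s].

Lemma has_cover_exists n (A : {set 'I_n}) : exists k, has_cover_of_size A k.
Proof.
exists #|A|; apply/existsP.
have sz : size [seq (i, i) | i <- enum A] == #|A| by rewrite size_map -cardE.
exists (Tuple sz); rewrite /is_interval_cover /=; apply/and3P; split.
- by apply/allP => p /mapP [i _ ->] /=.
- rewrite pairwise_map; apply: (sub_pairwise (r := [rel x y | x != y])).
    by move=> x y /=; rewrite neq_ltn.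
  by rewrite -uniq_pairwise enum_uniq.
- apply/forallP => x; rewrite has_map /=; apply/eqP.
  apply/idP/hasP => [xA | [i iA /andP [h1 h2]]].
    by exists x; rewrite ?mem_enum //= !leqnn.
  have -> : x = i by apply/val_inj/eqP; rewrite eqn_leq h1 h2.
  by rewrite -mem_enum.
Qed.

Definition intv n (A : {set 'I_n}) : nat := ex_minn (has_cover_exists A).

Definition diagram n (pi : 'S_n) : {set 'I_n * 'I_n} := [set (i, pi i) | i : 'I_n].
Definition proj_x n (S : {set 'I_n * 'I_n}) : {set 'I_n} := [set p.1 | p in S].
Definition proj_y n (S : {set 'I_n * 'I_n}) : {set 'I_n} := [set p.2 | p in S].
Definition intv_x n (S : {set 'I_n * 'I_n}) := intv (proj_x S).
Definition intv_y n (S : {set 'I_n * 'I_n}) := intv (proj_y S).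
Definition grid_complexity n (S : {set 'I_n * 'I_n}) := maxn (intv_x S) (intv_y S).

Definition prefix n (pi : 'S_n) (i : nat) : {set 'I_n * 'I_n} :=
  [set (j, pi j) | j : 'I_n & (j < i)%N].
Definition hpw n (pi : 'S_n) : nat := \max_(i < n) grid_complexity (prefix pi i.+1).

Definition bounded_hpw (C : forall n, 'S_n -> Prop) : Prop :=
  exists K, forall n (pi : 'S_n), C n pi -> hpw pi <= K.

(* Main.v *)
Require Import Defs.
From mathcomp Require Import all_boot all_fingroup.
Set Implicit Arguments. Unset Strict Implicit. Unset Printing Implicit Defensive.

Definition nA n (A : {set 'I_n}) (m : nat) : bool := [exists z in A, val z == m].
Definition starts n (A : {set 'I_n}) : {set 'I_n} :=
  [set x in A | (val x == 0) || ~~ nA A (val x).-1].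
Definition ends n (A : {set 'I_n}) : {set 'I_n} :=
  [set x in A | ~~ nA A (val x).+1].

Lemma nAE n (A : {set 'I_n}) (z : 'I_n) : nA A z = (z \in A).
Proof.
apply/existsP/idP => [[w /andP [wA /eqP e]]|zA]; last by exists z; rewrite zA eqxx.
by have -> : z = w by apply/val_inj.
Qed.

Lemma card_sep n (A T : {set 'I_n}) (s : seq ('I_n * 'I_n)) :
  is_interval_cover A s -> T \subset A ->
  (forall x y, x \in T -> y \in T -> (x < y)%N ->
     exists z, (x <= z <= y)%N /\ ~~ nA A z) -> #|T| <= size s.
Proof.
move=> /and3P [_ _ /forallP cov] TA sep.
pose a (x : 'I_n) := (fun p : 'I_n * 'I_n => (p.1 <= x <= p.2)%N).
pose g (x : 'I_n) := find (a x) s.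
have hasx x : x \in A -> has (a x) s by move=> xA; rewrite -(eqP (cov x)).
have gin x : x \in A -> (g x < size s)%N by move=> xA; rewrite -has_find hasx.
have noeq x y : x \in T -> y \in T -> (x < y)%N -> g x = g y -> False.
  move=> xT yT xy gxy.
  have xA : x \in A by apply: (subsetP TA).
  have yA : y \in A by apply: (subsetP TA).
  have hx := nth_find (x, x) (hasx x xA).
  have hy := nth_find (x, x) (hasx y yA).
  rewrite -/(g x) in hx; rewrite -/(g y) -gxy in hy.
  case: (sep x y xT yT xy) => z [/andP [xz zy] nz].
  have zn : (z < n)%N by apply: leq_ltn_trans zy (ltn_ord y).
  move: hx hy; rewrite /a => /andP [h1 _] /andP [_ h2].
  have zA : Ordinal zn \in A.
    rewrite (eqP (cov _)); apply/hasP; exists (nth (x, x) s (g x)).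
      by apply: mem_nth; apply: gin.
    by rewrite /= (leq_trans h1 xz) (leq_trans zy h2).
  by move: nz; rewrite -[z]/(val (Ordinal zn)) nAE zA.
rewrite cardE -(size_map g).
have U : uniq (map g (enum T)).
  rewrite map_inj_in_uniq ?enum_uniq // => x y; rewrite !mem_enum => xT yT gxy.
  case: (ltngtP x y) => [lt|lt|e]; last by apply/val_inj.
  - by case: (noeq x y xT yT lt gxy).
  - by case: (noeq y x yT xT lt (esym gxy)).
rewrite -(size_iota 0 (size s)); apply: uniq_leq_size U _ => m /mapP [x].
rewrite mem_enum => xT ->; rewrite mem_iota add0n /=.
by apply: gin; apply: (subsetP TA).
Qed.

Lemma card_sep_intv n (A T : {set 'I_n}) :
  T \subset A ->
  (forall x y, x \in T -> y \in T -> (x < y)%N ->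
     exists z, (x <= z <= y)%N /\ ~~ nA A z) -> #|T| <= intv A.
Proof.
move=> TA sep; rewrite /intv; case: ex_minnP => k /existsP [t cov] _.
by rewrite -(size_tuple t); apply: card_sep cov TA sep.
Qed.

Lemma starts_le n (A : {set 'I_n}) : #|starts A| <= intv A.
Proof.
apply: card_sep_intv; first by apply/subsetP => x; rewrite inE => /andP [].
move=> x y _; rewrite inE => /andP [_ /orP [/eqP y0|ny]] xy.
  by move: xy; rewrite y0.
exists y.-1; rewrite ny -ltnS prednK ?xy ?leq_pred //.
by apply: leq_ltn_trans xy.
Qed.

Lemma ends_le n (A : {set 'I_n}) : #|ends A| <= intv A.
Proof.
apply: card_sep_intv; first by apply/subsetP => x; rewrite inE => /andP [].
move=> x y; rewrite inE => /andP [_ nx] _ xy.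
by exists x.+1; rewrite nx leqnSn xy.
Qed.

Lemma exists_start n (A : {set 'I_n}) (x : 'I_n) : x \in A ->
  exists t : 'I_n, [/\ t \in starts A, (t <= x)%N &
    forall z : 'I_n, (t <= z <= x)%N -> z \in A].
Proof.
move=> xA.
pose P m := (m <= x)%N && [forall z : 'I_n, (m <= z <= x)%N ==> (z \in A)].
have exP : exists m, P m.
  exists x; rewrite /P leqnn /=; apply/forallP => z; apply/implyP => h.
  by have -> : z = x by apply/val_inj/eqP; rewrite eqn_leq andbC.
case: (ex_minnP exP) => m /andP [mx /forallP hm] mmin.
have mn : (m < n)%N by apply: leq_ltn_trans mx (ltn_ord x).
have hz (z : 'I_n) : (m <= z <= x)%N -> z \in A by move=> h; have := hm z; rewrite h.
exists (Ordinal mn); split => //=.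
rewrite inE hz ?leqnn ?mx //=.
case: (posnP m) => [->//|m0]; apply/orP; right; apply/negP => /existsP [w /andP [wA /eqP wm]].
have : (m <= m.-1)%N.
  apply: mmin; rewrite /P (leq_trans (leq_pred m) mx) /=.
  apply/forallP => z; apply/implyP => /andP [h1 h2].
  case: (ltngtP z m.-1) h1 => // [e|e] _.
    by apply: hz; rewrite h2 andbT -(prednK m0).
  by have -> : z = w by apply/val_inj; rewrite /= wm e.
by rewrite leqNgt ltn_predL m0.
Qed.

Lemma intv_le_starts n (A : {set 'I_n}) : intv A <= #|starts A|.
Proof.
rewrite /intv; case: ex_minnP => k _ kmin; apply: kmin.
pose Q (x j : 'I_n) := [forall z : 'I_n, ((x <= z) && (z <= j))%N ==> (z \in A)].
pose e (x : 'I_n) := [arg max_(j > x | Q x j) (val j)].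
have Qxx x : x \in A -> Q x x.
  move=> xA; apply/forallP => z; apply/implyP => h.
  by have -> : z = x by apply/val_inj/eqP; rewrite eqn_leq andbC.
have eP x : x \in A -> Q x (e x) /\ forall j, Q x j -> (j <= e x)%N.
  move=> xA; rewrite /e; case: arg_maxnP; first exact: Qxx.
  by move=> i Qi mx; split.
have stA x : x \in starts A -> x \in A by rewrite inE => /andP [].
have disj x y : x \in starts A -> y \in starts A -> (x < y)%N -> (e x < y)%N.
  move=> xs ys xy; rewrite ltnNge; apply/negP => ye.
  have [/forallP Qe _] := eP x (stA x xs).
  move: ys; rewrite inE => /andP [_ /orP [/eqP y0|]]; first by move: xy; rewrite y0.
  have y1n : (y.-1 < n)%N by apply: leq_ltn_trans (leq_pred _) (ltn_ord y).
  have := Qe (Ordinal y1n); rewrite /= -ltnS prednK ?xy ?(leq_trans (leq_pred _) ye) /=;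
    last by apply: leq_ltn_trans xy.
  by move=> h; rewrite -[y.-1]/(val (Ordinal y1n)) nAE h.
pose s := [seq (x, e x) | x <- enum (starts A)].
have sz : size s == #|starts A| by rewrite size_map -cardE.
apply/existsP; exists (Tuple sz); rewrite /is_interval_cover /=; apply/and3P; split.
- apply/allP => p /mapP [x]; rewrite mem_enum => xs -> /=.
  by have [_ h] := eP x (stA x xs); apply: h; apply: Qxx; apply: stA.
- rewrite pairwise_map.
  apply: (sub_pairwise (r := [rel x y | (x \in starts A) && (y \in starts A) && (x != y)])).
    move=> x y /= /andP [/andP [xs ys] nxy].
    case: (ltngtP x y) => [lt|lt|eq].
    + by rewrite (disj x y xs ys lt).
    + by rewrite (disj y x ys xs lt) orbT.
    + by move: nxy; rewrite (val_inj eq) eqxx.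
  have : all (mem (starts A)) (enum (starts A)) by apply/allP => z; rewrite mem_enum.
  have := enum_uniq (starts A).
  elim: (enum (starts A)) => //= a l IH /andP [al ul] /andP [aS lS].
  rewrite IH // andbT; apply/allP => b bl /=.
  by rewrite aS (allP lS b bl : b \in starts A) /=; apply/negP => /eqP ab; move: al; rewrite ab bl.
- apply/forallP => x; rewrite has_map /=; apply/eqP; apply/idP/hasP.
    move=> xA; have [t [ts tx tz]] := exists_start xA.
    exists t; rewrite ?mem_enum //= tx /=.
    have [_ h] := eP t (stA t ts); apply: h; apply/forallP => z; apply/implyP.
    exact: tz.
  move=> [t]; rewrite mem_enum => ts h.
  by have [/forallP Qe _] := eP t (stA t ts); have := Qe x; rewrite /= in h; rewrite h.
Qed.

Lemma memPy n (pi : 'S_n) c y :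
  (y \in proj_y (Defs.prefix pi c)) = ((pi^-1)%g y < c)%N.
Proof.
apply/imsetP/idP => [[p /imsetP [j]] | h].
  by rewrite inE => jc -> -> /=; rewrite permK.
exists ((pi^-1)%g y, y) => //; apply/imsetP; exists ((pi^-1)%g y); rewrite ?inE ?permKV //.
Qed.

Lemma memX n (pi : 'S_n) (S : {set 'I_n * 'I_n}) x : S \subset diagram pi ->
  (x \in proj_x S) = ((x, pi x) \in S).
Proof.
move=> Sd; apply/imsetP/idP => [[p pS ->] | h]; last by exists (x, pi x).
by have := subsetP Sd p pS; case/imsetP => i _ pe; rewrite pe /= -pe.
Qed.

Lemma memY n (pi : 'S_n) (S : {set 'I_n * 'I_n}) y : S \subset diagram pi ->
  (y \in proj_y S) = ((pi^-1)%g y \in proj_x S).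
Proof.
move=> Sd; rewrite (memX _ Sd); apply/imsetP/idP => [[p pS ->]| h].
  by have := subsetP Sd p pS; case/imsetP => i _ pe; rewrite pe /= permK -pe.
by exists ((pi^-1)%g y, pi ((pi^-1)%g y)); last rewrite permKV.
Qed.

Theorem mainTheorem11 (C : forall n, 'S_n -> Prop) :
  perm_class C -> bounded_hpw C ->
  exists alpha : nat, forall n (pi : 'S_n), C n pi ->
    forall S : {set 'I_n * 'I_n}, S \subset diagram pi ->
      intv_y S <= alpha * intv_x S.
Proof.
move=> _ [K hK]; exists (K + K) => n pi Cpi S Sd.
have hp := hK n pi Cpi.
rewrite /intv_y /intv_x.
set X := proj_x S; set Y := proj_y S.
pose Py c := proj_y (Defs.prefix pi c).
have PK c : (c <= n)%N -> intv (Py c) <= K.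
  case: c => [|c] cn.
    apply: leq_trans (intv_le_starts _) _.
    have : starts (Py 0) \subset set0 by apply/subsetP => y; rewrite inE memPy ltn0.
    by move/subset_leq_card; rewrite cards0 leqn0 => /eqP ->.
  apply: leq_trans hp; rewrite /hpw.
  have := @leq_bigmax _ (fun i : 'I_n => grid_complexity (Defs.prefix pi i.+1)) (Ordinal cn).
  by apply: leq_trans; apply: leq_maxr.
pose Q (t : 'I_n) (j : 'I_n.+1) := [forall z : 'I_n, ((t <= z) && (z < j))%N ==> (z \in X)].
pose cm t := [arg max_(j > ord0 | Q t j) val j].
pose F t := starts (Py (cm t)) :|: [set insubd w (val w).+1 | w in ends (Py t)].
have sub : starts Y \subset \bigcup_(t in starts X) F t.
  apply/subsetP => y; rewrite inE => /andP [yY ystart].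
  set x := (pi^-1)%g y.
  have xX : x \in X by rewrite -(memY _ Sd).
  have [t [ts tx tz]] := exists_start xX.
  apply/bigcupP; exists t => //.
  have [Qc cmax] : Q t (cm t) /\ forall j, Q t j -> (j <= cm t)%N.
    rewrite /cm; case: arg_maxnP => [| i Qi mx]; last by split.
    by apply/forallP => z; rewrite ltn0 andbF.
  have xc : (x < cm t)%N.
    have xn1 : (x.+1 < n.+1)%N by rewrite ltnS ltn_ord.
    apply: (cmax (Ordinal xn1)); apply/forallP => z; apply/implyP => /andP [h1 h2].
    by apply: tz; rewrite h1 -ltnS h2.
  have yPc : y \in Py (cm t) by rewrite memPy.
  rewrite inE; case ys: (y \in starts (Py (cm t))) => //=.
  move: ys; rewrite inE yPc /= => /negbT; rewrite negb_or negbK => /andP [y0 /existsP [w /andP [wP /eqP wy]]].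
  move: wP; rewrite memPy => wc.
  have wt : ((pi^-1)%g w < t)%N.
    rewrite ltnNge; apply/negP => tw.
    have : (pi^-1)%g w \in X by have := (forallP Qc) ((pi^-1)%g w); rewrite tw wc.
    rewrite -(memY _ Sd) => wY.
    by move: ystart; rewrite (negbTE y0) /= -wy nAE wY.
  apply/imsetP; exists w.
    rewrite inE memPy wt /= wy (@prednK (val y)) ?lt0n // nAE memPy -leqNgt tx //.
  by apply/val_inj; rewrite val_insubd -[nat_of_ord w]/(val w) wy prednK ?lt0n // ltn_ord.
have cardF t : #|F t| <= K + K.
  apply: leq_trans (leq_of_leqif (leq_card_setU _ _)) (leq_add _ _).
    by apply: leq_trans (starts_le _) (PK _ _); rewrite -ltnS ltn_ord.
  apply: leq_trans (leq_imset_card _ _) _.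
  by apply: leq_trans (ends_le _) (PK _ _); apply: ltnW (ltn_ord t).
apply: leq_trans (intv_le_starts Y) _.
apply: leq_trans (subset_leq_card sub) _.
have h : #|\bigcup_(t in starts X) F t| <= \sum_(t in starts X) #|F t|.
  apply: (big_ind2 (fun (U : {set 'I_n}) m => #|U| <= m)) => [|U1 m1 U2 m2 h1 h2|t _].
  - by rewrite cards0.
  - exact: leq_trans (leq_of_leqif (leq_card_setU _ _)) (leq_add h1 h2).
  - exact: leqnn.
apply: leq_trans h _.
apply: (@leq_trans (\sum_(t in starts X) (K + K))); first by apply: leq_sum => t _; apply: cardF.
by rewrite sum_nat_const mulnC leq_mul2l starts_le orbT.
Qed.
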